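(* Let $n\ge3$, $k\ge0$ with $k<n\le 2k$. Let $S\subseteq\mathrm{Inc}(A,B)$ be a maximal independent set of $G_n^k$ which is not reversible and which contains a strict alternating cycle of size $3$ satisfying the Disjoint Property. Then there exist an integer $t\ge1$ and an alternating cycle $C_0$ of size $2t+1$ in $\mathrm{Inc}(A,B)$ satisfying the Matching Conditions such that $S=D(C_0)$.
   Context: For integers $n\ge3$, $k\ge0$, the crown $S_n^k$ is the poset with ground set $A\cup B$, $A=\{a_1,\dots,a_{n+k}\}$, $B=\{b_1,\dots,b_{n+k}\}$, indices cyclic modulo $n+k$; elements of $A$ are pairwise incomparable, as are elements of $B$, and $a_i$ is incomparable to $b_j$ when $j\in\{i,\dots,i+k\}$ (mod $n+k$), while $a_i<b_j$ otherwise. $\mathrm{Inc}(A,B)$ is the set of pairs $(a,b)\in A\times B$ with $a$ incomparable to $b$; $G_n^k$ has vertex set $\mathrm{Inc}(A,B)$ with $(a,b)$ adjacent to $(x,y)$ iff $a<y$ and $x<b$. A set $R\subseteq\mathrm{Inc}(A,B)$ is reversible if some linear extension $L$ of $S_n^k$ has $b<a$ in $L$ for all $(a,b)\in R$. An indexed set $\{(x_\alpha,y_\alpha):\alpha\in[m]\}\subseteq\mathrm{Inc}(A,B)$ is an alternating cycle of size $m$ if $x_\alpha\le y_{\alpha-1}$ for all $\alpha$ (indices cyclic mod $m$); it is strict if $x_\alpha\le y_\beta$ holds iff $\beta=\alpha-1$. Circle conventions: points $u_1,\dots,u_{n+k}$ lie clockwise on a circle and both $a_i$ and $b_i$ are placed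 at $u_i$. For elements $p_1,\dots,p_\ell$, a chain $p_1\,R_1\,p_2\,R_2\cdots p_\ell$ with each $R_j\in\{\prec,\preceq\}$ means that travelling clockwise from the position of $p_1$ until first reaching the position of $p_\ell$ one meets the positions of $p_2,\dots,p_{\ell-1}$ in this order, where $\prec$ requires the two consecutive positions to be distinct and $\preceq$ allows them to coincide. The size of a pair $(v,v')$ with $v$ at $u_i$, $v'$ at $u_j$ is $j-i+1$ modulo $n+k$, taken in $\{1,\dots,n+k\}$. A strict alternating cycle $\{(x_\alpha,y_\alpha):\alpha\in[3]\}$ satisfies the Disjoint Property if $x_1\preceq y_1\prec x_2\preceq y_2\prec x_3\preceq y_3$. An alternating cycle $C_0=\{(x_\alpha,y_\alpha):\alpha\in[2t+1]\}$ (indices mod $2t+1$) satisfies the Matching Conditions if for every $\alpha$: (i) $x_\alpha\preceq y_\alpha\prec x_{\alpha+1}\preceq y_{\alpha+1}$, and (ii) the size of $(x_\alpha,y_{\alpha+t})$ is $k+1$. $D(C_0)$ is the set of all $(x,y)\in\mathrm{Inc}(A,B)$ for which there is $\alpha$ with $x_\alpha\preceq x\preceq y\preceq y_\alpha$. *)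

(* Defs.v *)
(* Crown posets S_n^k, with N = n + k. *)
From mathcomp Require Import all_boot.
Set Implicit Arguments. Unset Strict Implicit. Unset Printing Implicit Defensive.

(* clockwise offset from position i to position j on the circle u_0..u_{N-1} *)
Definition off (N i j : nat) : nat := (j + N - i) %% N.

(* a_i || b_j  iff  j in {i,...,i+k} (mod N) *)
Definition incb (N k i j : nat) : bool := off N i j <= k.
(* a_i < b_j otherwise *)
Definition ltAB (N k i j : nat) : bool := k < off N i j.

(* ground set A ∪ B : inl i = a_i, inr j = b_j *)
Definition elem (N : nat) := ('I_N + 'I_N)%type.

Definition le_crown (N k : nat) (u v : elem N) : bool :=
  (u == v) || match u, v with inl i, inr j => ltAB N k i j | _, _ => false end.

(* vertices of G_n^k : pairs (i,j) standing for (a_i, b_j) in Inc(A,B) *)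
Definition vtx (N : nat) := ('I_N * 'I_N)%type.
Definition Inc (N k : nat) : {set vtx N} := [set p : vtx N | incb N k p.1 p.2].

Definition adjG (N k : nat) (p q : vtx N) : bool :=
  le_crown k (inl p.1) (inr q.2) && le_crown k (inl q.1) (inr p.2).

Definition independent (N k : nat) (S : {set vtx N}) : Prop :=
  S \subset Inc N k /\ forall p q, p \in S -> q \in S -> ~~ adjG k p q.

Definition maximal_independent (N k : nat) (S : {set vtx N}) : Prop :=
  independent k S /\
  forall S' : {set vtx N}, S \subset S' -> independent k S' -> S' = S.

(* a linear extension, given by an injective order-preserving ranking *)
Definition linear_extension (N k : nat) (L : elem N -> nat) : Prop :=
  injective L /\ forall u v, le_crown k u v -> L u <= L v.

Definition reversible (N k : nat) (R : {set vtx N}) : Prop :=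
  exists L : elem N -> nat, linear_extension k L /\
    forall p, p \in R -> L (inr p.2) < L (inl p.1).

(* indexed families (x_a, y_a), a < m, indices taken mod m *)
Definition cyc (N m : nat) (c : nat -> vtx N) (a : nat) : vtx N := c (a %% m).
Definition xx (N m : nat) (c : nat -> vtx N) (a : nat) : 'I_N := (cyc m c a).1.
Definition yy (N m : nat) (c : nat -> vtx N) (a : nat) : 'I_N := (cyc m c a).2.

Definition alt_cycle (N k m : nat) (c : nat -> vtx N) : Prop :=
  0 < m /\
  (forall a b, a < m -> b < m -> c a = c b -> a = b) /\
  (forall a, a < m -> c a \in Inc N k) /\
  (forall a, a < m -> le_crown k (inl (xx m c a)) (inr (yy m c (a + m - 1)))).

Definition strict_alt_cycle (N k m : nat) (c : nat -> vtx N) : Prop :=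
  alt_cycle k m c /\
  forall a b, a < m -> b < m ->
    (le_crown k (inl (xx m c a)) (inr (yy m c b)) <-> b = (a + m - 1) %% m).

(* circle chains p1 R1 p2 R2 ... pl : a step (true, q) is "≺ q",
   (false, q) is "⪯ q"; positions are compared by their clockwise offset
   from p1, taken in [0, N). *)
Fixpoint chain_aux (N p1 prev : nat) (st : seq (bool * nat)) : bool :=
  match st with
  | [::] => true
  | (s, q) :: st' =>
      (if s then off N p1 prev < off N p1 q else off N p1 prev <= off N p1 q)
      && chain_aux N p1 q st'
  end.
Definition chain (N p1 : nat) (st : seq (bool * nat)) : bool :=
  chain_aux N p1 p1 st.

(* size of a pair (v at u_i, v' at u_j): j - i + 1 mod N, in {1..N} *)
Definition pair_size (N i j : nat) : nat := (off N i j).+1.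

Definition disjoint_property (N : nat) (c : nat -> vtx N) : bool :=
  chain N (xx 3 c 0)
    [:: (false, nat_of_ord (yy 3 c 0)); (true, nat_of_ord (xx 3 c 1));
        (false, nat_of_ord (yy 3 c 1)); (true, nat_of_ord (xx 3 c 2));
        (false, nat_of_ord (yy 3 c 2))].

Definition matching_conditions (N k t : nat) (c : nat -> vtx N) : Prop :=
  let m := (2 * t).+1 in
  forall a, a < m ->
    chain N (xx m c a)
      [:: (false, nat_of_ord (yy m c a)); (true, nat_of_ord (xx m c a.+1));
          (false, nat_of_ord (yy m c a.+1))]
    /\ pair_size N (xx m c a) (yy m c (a + t)) = k.+1.

Definition Dset (N k m : nat) (c : nat -> vtx N) : {set vtx N} :=
  [set p in Inc N k | [exists a : 'I_m,
     chain N (xx m c a) [:: (false, nat_of_ord p.1); (false, nat_of_ord p.2);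
                            (false, nat_of_ord (yy m c a))]]].

(* Main.v *)
Require Import Defs.
From mathcomp Require Import all_boot zify.
Set Implicit Arguments. Unset Strict Implicit. Unset Printing Implicit Defensive.

Lemma offE N i j : i < N -> j < N -> off N i j = if i <= j then j - i else j + N - i.
Proof.
rewrite /off => iN jN; case: leqP => h.
  have -> : j + N - i = (j - i) + N by lia.
  by rewrite modnDr modn_small //; lia.
by rewrite modn_small //; lia.
Qed.

Lemma offL N i j : 0 < N -> off N i j < N.
Proof. by move=> h; rewrite /off ltn_pmod. Qed.

Lemma offBD N (b i j : 'I_N) :
  (off N b i <= off N b j /\ off N i j = off N b j - off N b i) \/
  (off N b j < off N b i /\ off N i j = off N b j + N - off N b i).
Proof.
have bN := ltn_ord b; have iN := ltn_ord i; have jN := ltn_ord j.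
rewrite (offE iN jN) (offE bN iN) (offE bN jN).
case: (leqP i j) => h1; case: (leqP b i) => h2; case: (leqP b j) => h3; lia.
Qed.

Lemma offB1 N (b i j : 'I_N) : off N b i <= off N b j -> off N i j = off N b j - off N b i.
Proof. by case: (offBD b i j) => -[h e] //; lia. Qed.
Lemma offB2 N (b i j : 'I_N) : off N b j < off N b i -> off N i j = off N b j + N - off N b i.
Proof. by case: (offBD b i j) => -[h e] //; lia. Qed.

Lemma off0 N (i : 'I_N) : off N i i = 0.
Proof. by rewrite (offE (ltn_ord i) (ltn_ord i)) leqnn subnn. Qed.

Lemma offN N (i j: 'I_N) : off N i j < N.
Proof. by apply: offL; case: N i j => [[]|]. Qed.

Lemma off_inj N (b i j : 'I_N) : off N b i = off N b j -> i = j.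
Proof.
have bN := ltn_ord b; have iN := ltn_ord i; have jN := ltn_ord j.
rewrite (offE bN iN) (offE bN jN) => h; apply: val_inj => /=.
move: h; case: (leqP b i) => h2; case: (leqP b j) => h3; lia.
Qed.

Lemma off_eq0 N (i j : 'I_N) : off N i j = 0 -> i = j.
Proof. by move=> h; apply/esym/(@off_inj _ i); rewrite h off0. Qed.

Lemma offsum N (i j : 'I_N) : i != j -> off N i j + off N j i = N.
Proof.
have iN := ltn_ord i; have jN := ltn_ord j.
move=> /eqP ne; rewrite (offE iN jN) (offE jN iN).
have ne' : nat_of_ord i <> nat_of_ord j by move=> h; apply: ne; apply: val_inj.
case: (leqP i j) => h2; case: (leqP j i) => h3; lia.
Qed.


Lemma le_crownE N k (i j : 'I_N) : le_crown k (inl i) (inr j) = (k < off N i j).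
Proof. by []. Qed.

Definition nadj N k (p q : vtx N) := (off N p.1 q.2 <= k) || (off N q.1 p.2 <= k).

Lemma adjGE N k (p q : vtx N) : adjG k p q = ~~ nadj k p q.
Proof. by rewrite /adjG !le_crownE /nadj negb_or -!ltnNge. Qed.

Lemma core_l1b N k (a b c d x2 y1 y2 x3 y3 : 'I_N) :
 2*k < N ->
 off N a y1 < off N a x2 -> off N a x2 <= off N a y2 -> off N a y2 < off N a x3 -> off N a x3 <= off N a y3 ->
 0 < off N a c -> off N a c <= off N a b -> off N a b < off N a d -> off N a b <= k -> k < off N a d -> off N c d <= k ->
 off N x3 y1 <= k -> off N x2 y3 <= k -> k < off N x2 y1 -> k < off N x3 y2 ->
 (off N a y3 <= k \/ off N x3 b <= k) ->
 (off N c y3 <= k \/ off N x3 d <= k) ->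
 (off N a y2 <= k \/ off N x2 b <= k) ->
 (off N c y2 <= k \/ off N x2 d <= k) -> False.
Proof.
move=> Nk h1 h2 h3 h4 p1 p2 p3 p4 p5 p6 s31 s23 n21 n32.
have hN := offN a y3.
have hN2 := offN a x3.
have ecd : off N c d = off N a d - off N a c by apply: offB1; lia.
rewrite (offB2 (b:=a)) in s31; last by lia.
rewrite (offB2 (b:=a)) in n32; last by lia.
rewrite (offB1 (b:=a)) in s23; last by lia.
rewrite (offB2 (b:=a)) in n21; last by lia.
have X3b : off N a b < off N a x3 by lia.
rewrite (offB2 (b:=a) X3b).
move=> i3p.
have X3B : off N a b + N - k <= off N a x3 by lia.
clear i3p.
have X3d : off N a d < off N a x3 by lia.
rewrite (offB2 (b:=a) X3d) (offB1 (b:=a)); last by lia.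
move=> i3q.
have X3D : off N a d + N - k <= off N a x3 by lia.
clear i3q.
move=> i2p.
have X2b : off N a b < off N a x2.
  case: (leqP (off N a x2) (off N a b)) => // h.
  rewrite (offB1 (b:=a) h) in i2p; lia.
rewrite (offB2 (b:=a) X2b) in i2p.
have X2B : off N a b + N - k <= off N a x2 by lia.
clear i2p.
have X2d : off N a d < off N a x2 by lia.
rewrite (offB2 (b:=a) X2d) (offB1 (b:=a)); last by lia.
move=> i2q.
have X2D : off N a d + N - k <= off N a x2 by lia.
lia.
Qed.


Lemma strict3 N k (c : nat -> vtx N) : strict_alt_cycle k 3 c ->
  forall i j, i < 3 -> j < 3 -> (k < off N (c i).1 (c j).2) = (j == (i + 2) %% 3).
Proof.
move=> [_ H] i j hi hj; have := H i j hi hj.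
rewrite /xx /yy /cyc (modn_small hi) (modn_small hj).
have -> : i + 3 - 1 = i + 2 by lia.
by move=> [h1 h2]; apply/idP/eqP => h; [exact: h1 h | exact: h2 h].
Qed.

Lemma rot N (a : 'I_N) (x0 y0 x1 y1 x2 y2 : 'I_N) :
  off N x0 y0 < off N x0 x1 -> off N x0 x1 <= off N x0 y1 -> off N x0 y1 < off N x0 x2 ->
  off N x0 x2 <= off N x0 y2 ->
  [/\ off N a y0 < off N a x1, off N a x1 <= off N a y1, off N a y1 < off N a x2 & off N a x2 <= off N a y2] \/
  [/\ off N a y1 < off N a x2, off N a x2 <= off N a y2, off N a y2 < off N a x0 & off N a x0 <= off N a y0] \/
  [/\ off N a y2 < off N a x0, off N a x0 <= off N a y0, off N a y0 < off N a x1 & off N a x1 <= off N a y1].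
Proof.
move=> h1 h2 h3 h4.
have hN := offN x0 y2.
have hA := offN x0 a.
have r1 (z : 'I_N) : off N x0 a <= off N x0 z -> off N a z = off N x0 z - off N x0 a by apply: offB1.
have r2 (z : 'I_N) : off N x0 z < off N x0 a -> off N a z = off N x0 z + N - off N x0 a by apply: offB2.
have ex0 : off N a x0 = if off N x0 a == 0 then 0 else N - off N x0 a.
  case: eqP => h.
    by rewrite (r1 x0) off0 ?h.
  by rewrite (r2 x0) off0; try split; lia.
rewrite ex0.
case: (leqP (off N x0 a) 0) => hA0.
  have -> : off N x0 a = 0 by lia.
  left; rewrite !r1 //; try split; lia.
have hA0' : (off N x0 a == 0) = false by apply/eqP; try split; lia.
rewrite hA0'.
case: (leqP (off N x0 a) (off N x0 y0)) => hA1.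
  left; rewrite !r1 //; try split; lia.
rewrite (r2 y0) //.
case: (leqP (off N x0 a) (off N x0 y1)) => hA2.
  right; left; rewrite !(r1 y1) ?(r1 x2) ?(r1 y2); try split; lia.
rewrite (r2 y1) // (r2 x1); last lia.
case: (leqP (off N x0 a) (off N x0 y2)) => hA3.
  right; right; rewrite !(r1 y2) //; try split; lia.
left; rewrite !(r2 x2) ?(r2 y2) //; try split; lia.
Qed.

Lemma core_l1a N k (a b c d x y : 'I_N) :
  2*k < N ->
  0 < off N a c -> off N a c <= off N a b -> off N a b < off N a d -> off N a d <= k ->
  off N x y <= k ->
  ((off N a y <= k) || (off N x b <= k)) -> ((off N c y <= k) || (off N x d <= k)) ->
  (off N a y <= k) || (off N x d <= k).
Proof.
move=> Nk h1 h2 h3 h4 hxy /orP hb /orP hc; apply/orP.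
case: (leqP (off N a y) k) => hy; [by left|right].
case: hb => hb; first lia.
case: hc => hc //.
have ec : off N c y = off N a y - off N a c by apply: offB1; lia.
rewrite ec in hc.
have hN := offN a y.
case: (offBD a x b) hb => -[hh ->] hb; case: (offBD a x y) hxy => -[hh' ->] hxy; case: (offBD a x d) => -[hh'' ->]; lia.
Qed.


Definition inside N (s m : vtx N) :=
  (off N m.1 s.1 <= off N m.1 s.2) && (off N m.1 s.2 <= off N m.1 m.2).

Lemma inside_refl N (m : vtx N) : inside m m.
Proof. by rewrite /inside off0 leqnn. Qed.

Lemma inside_trans N (s q m : vtx N) : inside s q -> inside q m -> inside s m.
Proof.
rewrite /inside => /andP[h1 h2] /andP[h3 h4]; apply/andP.
have hN := offN m.1 m.2.
rewrite (offB1 (b:=m.1) h3) in h2.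
case: (offBD m.1 q.1 s.1) h1 h2 => -[hh ->]; case: (offBD m.1 q.1 s.2) => -[hh' ->]; lia.
Qed.

Lemma inside_len N (s m : vtx N) : inside s m ->
  off N s.1 s.2 <= off N m.1 m.2 /\ (off N s.1 s.2 = off N m.1 m.2 -> s = m).
Proof.
rewrite /inside => /andP[h1 h2].
rewrite (offB1 h1); split; first lia.
move=> e.
have e1 : off N m.1 s.1 = 0 by lia.
have e2 : off N m.1 s.2 = off N m.1 m.2 by lia.
move: (off_eq0 e1) (off_inj e2); case: s {h1 h2 e e1 e2} => s1 s2; case: m => m1 m2 /= <- ->.
done.
Qed.

Section Main.
Variables (N k : nat) (S : {set vtx N}).
Hypothesis Nk : 2*k < N.
Hypothesis Hmax : maximal_independent k S.

Lemma S_inc (p : vtx N) : p \in S -> off N p.1 p.2 <= k.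
Proof. by move=> pS; have := subsetP Hmax.1.1 p pS; rewrite inE. Qed.

Lemma S_nadj (p q : vtx N) : p \in S -> q \in S -> nadj k p q.
Proof. by move=> pS qS; have := Hmax.1.2 p q pS qS; rewrite adjGE negbK. Qed.

Lemma nadjC (p q : vtx N) : nadj k p q = nadj k q p.
Proof. by rewrite /nadj orbC. Qed.

Lemma add_max (r : vtx N) : off N r.1 r.2 <= k -> (forall s : vtx N, s \in S -> nadj k r s) -> r \in S.
Proof.
move=> hr hs.
have ind : independent k (r |: S).
  split.
    apply/subsetP => p; rewrite !inE => /orP[/eqP ->|pS]; first by [].
    by have := subsetP Hmax.1.1 p pS; rewrite inE.
  move=> p q; rewrite !inE adjGE negbK => /orP[/eqP ->|pS] /orP[/eqP ->|qS].
  - by rewrite /nadj hr.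
  - exact: hs.
  - by rewrite nadjC; apply: hs.
  - exact: S_nadj.
have := Hmax.2 _ (subsetUr _ _) ind.
by move=> <-; rewrite setU11.
Qed.

Definition MS := [set m in S | [forall s in S, inside m s ==> (s == m)]].

Lemma MS_S (m : vtx N) : m \in MS -> m \in S.
Proof. by rewrite inE => /andP[]. Qed.

Lemma MS_max (m s : vtx N) : m \in MS -> s \in S -> inside m s -> s = m.
Proof. by rewrite inE => /andP[_ /forall_inP H] sS hi; apply/eqP; apply: (implyP (H s sS)). Qed.

Lemma exists_max (s : vtx N) : s \in S -> exists2 m, m \in MS & inside s m.
Proof.
move=> sS.
have P0 : (fun m : vtx N => (m \in S) && inside s m) s by rewrite /= sS inside_refl.
case: (@arg_maxnP _ s [pred m | (m \in S) && inside s m] (fun m => off N m.1 m.2) P0).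
move=> m /andP[mS hsm] Hm; exists m => //.
rewrite inE mS /=; apply/forall_inP => s' s'S; apply/implyP => hms'.
have hss' := inside_trans hsm hms'.
have /= := Hm s' (introT andP (conj s'S hss')).
case: (inside_len hms') => h1 h2 h3.
by apply/eqP/esym/h2; lia.
Qed.

End Main.


Lemma disjE N (c : nat -> vtx N) : disjoint_property c ->
  [/\ off N (c 0).1 (c 0).2 < off N (c 0).1 (c 1).1, off N (c 0).1 (c 1).1 <= off N (c 0).1 (c 1).2,
      off N (c 0).1 (c 1).2 < off N (c 0).1 (c 2).1 & off N (c 0).1 (c 2).1 <= off N (c 0).1 (c 2).2].
Proof.
rewrite /disjoint_property /chain /=.
have e0 : xx 3 c 0 = (c 0).1 := erefl. have e1 : xx 3 c 1 = (c 1).1 := erefl.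
have e2 : xx 3 c 2 = (c 2).1 := erefl. have f0 : yy 3 c 0 = (c 0).2 := erefl.
have f1 : yy 3 c 1 = (c 1).2 := erefl. have f2 : yy 3 c 2 = (c 2).2 := erefl.
rewrite e0 e1 e2 f0 f1 f2.
by case/and5P => _ h1 h2 h3 /andP[h4 _]; split.
Qed.

Section Cyc.
Variables (N k : nat) (S : {set vtx N}) (c : nat -> vtx N).
Hypothesis Nk : 2*k < N.
Hypothesis Hmax : maximal_independent k S.
Hypothesis Hc : strict_alt_cycle k 3 c.
Hypothesis HcS : forall a, a < 3 -> c a \in S.
Hypothesis Hd : disjoint_property c.

Lemma L1 (m m' : vtx N) : m \in MS S -> m' \in MS S -> m != m' ->
  off N m.1 m.2 < off N m.1 m'.1.
Proof.
move=> mM m'M ne.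
have mS := MS_S mM; have m'S := MS_S m'M.
have hB := S_inc Hmax mS; have hcd := S_inc Hmax m'S.
rewrite ltnNge; apply/negP => hCB.
case: (ltnP (off N m.1 m'.2) (off N m.1 m'.1)) => hDC.
  rewrite (offB2 (b:=m.1) hDC) in hcd.
  have := offN m.1 m'.1; lia.
case: (leqP (off N m.1 m'.2) (off N m.1 m.2)) => hDB.
  have := MS_max m'M mS; rewrite /inside hDC hDB => /(_ isT) e.
  by move: ne; rewrite e eqxx.
case: (ltnP 0 (off N m.1 m'.1)) => hC0; last first.
  have e : m.1 = m'.1 by apply: off_eq0; lia.
  have hin : inside m m' by rewrite /inside -e off0; apply/andP; split; lia.
  by have e' := MS_max mM m'S hin; move: ne; rewrite e' eqxx.
case: (leqP (off N m.1 m'.2) k) => hDk.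
  pose u : vtx N := (m.1, m'.2).
  have uS : u \in S.
    apply: (add_max Hmax) => //= s sS.
    apply: (core_l1a Nk hC0 hCB hDB hDk (S_inc Hmax sS)).
      exact: (S_nadj Hmax mS sS).
    exact: (S_nadj Hmax m'S sS).
  have hin : inside m u by rewrite /inside /= off0; apply/andP; split; lia.
  have e := MS_max mM uS hin.
  have : m'.2 = m.2 by rewrite -[in RHS]e.
  move=> e2; move: hDB; rewrite e2; lia.
have sf i j : i < 3 -> j < 3 -> (k < off N (c i).1 (c j).2) = (j == (i + 2) %% 3) := strict3 Hc (i:=i) (j:=j).
have l20 : off N (c 2).1 (c 0).2 <= k by rewrite leqNgt sf.
have l12 : off N (c 1).1 (c 2).2 <= k by rewrite leqNgt sf.
have l01 : off N (c 0).1 (c 1).2 <= k by rewrite leqNgt sf.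
have g10 : k < off N (c 1).1 (c 0).2 by rewrite sf.
have g21 : k < off N (c 2).1 (c 1).2 by rewrite sf.
have g02 : k < off N (c 0).1 (c 2).2 by rewrite sf.
have nd (p : vtx N) : p \in S -> off N m.1 p.2 <= k \/ off N p.1 m.2 <= k.
  by move=> pS; have := S_nadj Hmax mS pS; rewrite /nadj => /orP.
have nd' (p : vtx N) : p \in S -> off N m'.1 p.2 <= k \/ off N p.1 m'.2 <= k.
  by move=> pS; have := S_nadj Hmax m'S pS; rewrite /nadj => /orP.
have hB' : off N m.1 m.2 < off N m.1 m'.2 by [].
case: (disjE Hd) => d1 d2 d3 d4.
case: (rot m.1 d1 d2 d3 d4) => [[o1 o2 o3 o4]|[[o1 o2 o3 o4]|[o1 o2 o3 o4]]].
- exact: (core_l1b Nk o1 o2 o3 o4 hC0 hCB hB' hB hDk hcd l20 l12 g10 g21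
            (nd _ (HcS (isT : 2 < 3))) (nd' _ (HcS (isT : 2 < 3))) (nd _ (HcS (isT : 1 < 3))) (nd' _ (HcS (isT : 1 < 3)))).
- exact: (core_l1b Nk o1 o2 o3 o4 hC0 hCB hB' hB hDk hcd l01 l20 g21 g02
            (nd _ (HcS (isT : 0 < 3))) (nd' _ (HcS (isT : 0 < 3))) (nd _ (HcS (isT : 2 < 3))) (nd' _ (HcS (isT : 2 < 3)))).
- exact: (core_l1b Nk o1 o2 o3 o4 hC0 hCB hB' hB hDk hcd l12 l01 g02 g10
            (nd _ (HcS (isT : 1 < 3))) (nd' _ (HcS (isT : 1 < 3))) (nd _ (HcS (isT : 0 < 3))) (nd' _ (HcS (isT : 0 < 3)))).
Qed.

End Cyc.


Lemma off_add N (b x y : 'I_N) : off N b x + off N x y < N -> off N b y = off N b x + off N x y.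
Proof. by case: (offBD b x y) => -[h ->]; lia. Qed.

Lemma inside_base N (b : 'I_N) (s m : vtx N) : inside s m -> off N b m.1 + off N m.1 m.2 < N ->
  [/\ off N b m.1 <= off N b s.1, off N b s.1 <= off N b s.2 &
      off N b s.2 <= off N b m.1 + off N m.1 m.2].
Proof.
rewrite /inside => /andP[h1 h2] h.
rewrite (@off_add _ b m.1 s.1) ?(@off_add _ b m.1 s.2); try lia.
split; lia.
Qed.

Lemma modS N v : v < N -> v.+1 %% N = if v.+1 == N then 0 else v.+1.
Proof.
move=> h; case: eqP => [->|ne]; first by rewrite modnn.
by rewrite modn_small //; lia.
Qed.

Lemma offpred N (x x' z : 'I_N) : nat_of_ord x' = (x + N - 1) %% N -> off N x' z = (off N x z).+1 %% N.
Proof.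
have xN := ltn_ord x; have zN := ltn_ord z; have x'N := ltn_ord x'.
have ex : (x + N - 1) %% N = if x == 0 :> nat then N - 1 else x - 1.
  case: eqP => [->|ne]; first by rewrite modn_small; lia.
  have -> : x + N - 1 = (x - 1) + N by lia.
  by rewrite modnDr modn_small; lia.
rewrite ex => e.
rewrite modS; last exact: offN.
rewrite (offE x'N zN) (offE xN zN) e.
case: eqP => h1 /=.
  by case: leqP => h2; case: leqP => h3; case: eqP => h4; lia.
by case: leqP => h2; case: leqP => h3; case: eqP => h4; lia.
Qed.

Lemma small_off N k (b x y : 'I_N) : 2*k < N -> off N b x <= k -> off N b y <= k ->
  (off N x y <= k) = (off N b x <= off N b y).
Proof. by move=> Nk hx hy; case: (offBD b x y) => -[h ->]; apply/idP/idP; lia. Qed.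

Section Final.
Variables (N k : nat) (S : {set vtx N}) (c : nat -> vtx N) (m0 : vtx N).
Hypothesis Nk : 2*k < N.
Hypothesis Hmax : maximal_independent k S.
Hypothesis Hc : strict_alt_cycle k 3 c.
Hypothesis HcS : forall a, a < 3 -> c a \in S.
Hypothesis Hd : disjoint_property c.
Hypothesis m0M : m0 \in MS S.

Let b0 := m0.1.
Let key (m : vtx N) := off N b0 m.1.
Let leK := fun m m' : vtx N => key m <= key m'.
Let sq := sort leK (enum (MS S)).
Let L := size sq.
Let cc i := nth m0 sq i.
Let X i := key (cc i).
Let Y i := off N b0 (cc i).2.

Lemma L1' (m m' : vtx N) : m \in MS S -> m' \in MS S -> m != m' ->
  off N m.1 m.2 < off N m.1 m'.1.
Proof. exact: (L1 Nk Hmax Hc HcS Hd). Qed.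

Lemma cc_M i : i < L -> cc i \in MS S.
Proof. by move=> h; have := mem_nth m0 h; rewrite mem_sort mem_enum. Qed.

Lemma cc_onto m : m \in MS S -> exists2 i, i < L & cc i = m.
Proof.
move=> mM; have msq : m \in sq by rewrite mem_sort mem_enum.
by exists (index m sq); [rewrite index_mem | rewrite /cc nth_index].
Qed.

Lemma sq_uniq : uniq sq.
Proof. by rewrite sort_uniq enum_uniq. Qed.

Lemma cc_inj i j : i < L -> j < L -> cc i = cc j -> i = j.
Proof. by move=> hi hj e; apply/eqP; rewrite -(nth_uniq m0 hi hj sq_uniq); apply/eqP; exact: e. Qed.

Lemma X_le i j : i <= j -> j < L -> X i <= X j.
Proof.
move=> hij hj.
have tr : transitive leK by move=> x y z; rewrite /leK; lia.
have := @sorted_leq_nth _ leK tr (fun x => leqnn _) m0 sq (sort_sorted (fun x y => leq_total _ _) _).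
move=> H; apply: (H i j) => //; rewrite inE /=.
by apply: (leq_ltn_trans hij); exact: hj.
Qed.

Lemma X_lt i j : i < j -> j < L -> X i < X j.
Proof.
move=> hij hj.
have ne : cc i != cc j by apply/eqP => e; have := cc_inj (ltn_trans hij hj) hj e; lia.
have := L1' (cc_M (ltn_trans hij hj)) (cc_M hj) ne.
have := X_le (ltnW hij) hj.
rewrite leq_eqVlt => /orP[/eqP e|//].
have e' : (cc i).1 = (cc j).1 by apply: (@off_inj _ b0).
by rewrite e' off0.
Qed.

Lemma L_pos : 0 < L.
Proof. by case: (cc_onto m0M) => i hi _; exact: leq_ltn_trans (leq0n i) hi. Qed.

Lemma X0 : X 0 = 0.
Proof.
case: (cc_onto m0M) => j hj e.
have := X_le (leq0n j) hj.
by rewrite /X e /key /b0 off0; lia.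
Qed.

Lemma len_lt i : i < L -> X i + off N (cc i).1 (cc i).2 < N.
Proof.
move=> hi.
have hk := S_inc Hmax (MS_S (cc_M hi)).
case: (eqVneq (cc i).1 b0) => e.
  by rewrite /X /key e off0 add0n; exact: offN.
have ne : cc i != m0 by apply/eqP => e'; move: e; rewrite e' eqxx.
have := L1' (cc_M hi) m0M ne.
have := offsum e.
rewrite /X /key -/b0; lia.
Qed.

Lemma YE i : i < L -> Y i = X i + off N (cc i).1 (cc i).2.
Proof. by move=> hi; apply: off_add; apply: len_lt. Qed.

Lemma XY i : i < L -> X i <= Y i /\ Y i <= X i + k.
Proof.
move=> hi; rewrite YE //.
have := S_inc Hmax (MS_S (cc_M hi)); lia.
Qed.

Lemma YX1 i : i.+1 < L -> Y i < X i.+1.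
Proof.
move=> hi.
have hi' : i < L by lia.
have ne : cc i != cc i.+1 by apply/eqP => e; have := cc_inj hi' hi e; lia.
have := L1' (cc_M hi') (cc_M hi) ne.
have h3 := X_lt (ltnSn i) hi.
have h2 : off N (cc i).1 (cc i.+1).1 = X i.+1 - X i by apply: offB1; exact: ltnW.
rewrite (YE hi'); lia.
Qed.

Lemma Y_lt_X i j : i < j -> j < L -> Y i < X j.
Proof.
move=> hij hj.
have := YX1 (leq_ltn_trans hij hj).
have := X_le hij hj; lia.
Qed.

Lemma YN i : Y i < N.
Proof. exact: offN. Qed.

Lemma in_base s i : i < L -> inside s (cc i) ->
  [/\ X i <= off N b0 s.1, off N b0 s.1 <= off N b0 s.2 & off N b0 s.2 <= Y i].
Proof.
move=> hi hin; rewrite YE //.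
exact: inside_base hin (len_lt hi).
Qed.


Lemma mono2 i j (p q : vtx N) : i < L -> j < L -> i != j -> inside p (cc i) -> inside q (cc j) ->
  off N p.1 q.2 <= off N (cc i).1 (cc j).2.
Proof.
move=> hi hj ne hp hq.
case: (in_base hi hp) => p1 p2 p3.
case: (in_base hj hq) => q1 q2 q3.
case: (XY hi) => xy1 xy2; case: (XY hj) => xy3 xy4.
have exi : X i = off N b0 (cc i).1 := erefl.
have eyj : Y j = off N b0 (cc j).2 := erefl.
case: (ltngtP i j) ne => // hij _.
- have h1 := Y_lt_X hij hj.
  rewrite (@offB1 _ b0 p.1 q.2); last by lia.
  rewrite (@offB1 _ b0 (cc i).1 (cc j).2); last by lia.
  lia.
- have h1 := Y_lt_X hij hi.
  rewrite (@offB2 _ b0 p.1 q.2); last by lia.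
  rewrite (@offB2 _ b0 (cc i).1 (cc j).2); last by lia.
  lia.
Qed.

Lemma nadj_same i (p q : vtx N) : i < L -> inside p (cc i) -> inside q (cc i) -> nadj k p q.
Proof.
move=> hi hp hq.
case: (in_base hi hp) => p1 p2 p3.
case: (in_base hi hq) => q1 q2 q3.
case: (XY hi) => xy1 xy2.
rewrite /nadj; case: (leqP (off N b0 p.1) (off N b0 q.2)) => h.
  by rewrite (@offB1 _ b0 p.1 q.2) //; apply/orP; left; lia.
rewrite (@offB1 _ b0 q.1 p.2); last by lia.
by apply/orP; right; lia.
Qed.

Lemma nadj_in i j (p q : vtx N) : i < L -> j < L -> inside p (cc i) -> inside q (cc j) -> nadj k p q.
Proof.
move=> hi hj hp hq.
case: (eqVneq i j) => [e|ne].
  by subst j; exact: nadj_same hp hq.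
have := S_nadj Hmax (MS_S (cc_M hi)) (MS_S (cc_M hj)).
have h1 := mono2 hi hj ne hp hq.
have h2 := mono2 hj hi (negbT (introF eqP (fun e => (elimN eqP ne) (esym e)))) hq hp.
rewrite /nadj => /orP[h|h]; apply/orP; [left|right]; lia.
Qed.


Lemma tight i : i < L -> exists2 j, j < L & off N (cc i).1 (cc j).2 = k.
Proof.
move=> hi.
case: (boolP [exists j : 'I_L, off N (cc i).1 (cc j).2 == k]) => [/existsP[j /eqP e]|/existsPn H].
  by exists j.
exfalso.
have N0 : 0 < N by lia.
have HH j : j < L -> off N (cc i).1 (cc j).2 != k by move=> hj; exact: (H (Ordinal hj)).
have hk := S_inc Hmax (MS_S (cc_M hi)).
have hlen : off N (cc i).1 (cc i).2 < k by have := HH i hi; lia.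
pose x' : 'I_N := Ordinal (ltn_pmod ((cc i).1 + N - 1) N0).
have ex' : nat_of_ord x' = ((cc i).1 + N - 1) %% N by [].
pose r : vtx N := (x', (cc i).2).
have rl : off N r.1 r.2 = (off N (cc i).1 (cc i).2).+1.
  by rewrite /= (offpred _ ex') modn_small //; lia.
have rS : r \in S.
  apply: (add_max Hmax); first by rewrite rl.
  move=> s sS.
  case: (exists_max Nk sS) => m mM hsm.
  case: (cc_onto mM) => j hj ejm; rewrite -ejm in hsm.
  rewrite /nadj /= (offpred _ ex').
  have hm : (off N (cc i).1 s.2).+1 %% N <= (off N (cc i).1 s.2).+1 by apply: leq_mod.
  case: (eqVneq i j) => [eij|nij].
    subst j; move: hsm; rewrite /inside => /andP[_ h2].
    by apply/orP; left; apply: leq_trans hm _; lia.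
  have := S_nadj Hmax (MS_S (cc_M hi)) (MS_S (cc_M hj)); rewrite /nadj => /orP[h|h].
    have h1 := mono2 hi hj nij (inside_refl (cc i)) hsm.
    have h2 := HH j hj.
    by apply/orP; left; apply: leq_trans hm _; lia.
  have nji : j != i by rewrite eq_sym.
  have h1 := mono2 hj hi nji hsm (inside_refl (cc i)).
  by apply/orP; right; lia.
have hin : inside (cc i) r.
  rewrite /inside /= !(offpred _ ex') off0 modn_small; last by lia.
  rewrite modn_small; last by lia.
  apply/andP; split; lia.
have := MS_max (cc_M hi) rS hin.
move=> e.
have : off N x' (cc i).1 = 1 by rewrite (offpred _ ex') off0 modn_small //; lia.
have -> : x' = (cc i).1 by rewrite -[in RHS]e.
by rewrite off0.
Qed.


Let Yl j := if j < L then Y j else Y (j - L) + N.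
Let Xl j := if j < L then X j else X (j - L) + N.

Lemma modL j : j < L + L -> j %% L = if j < L then j else j - L.
Proof.
move=> h; case: ifP => h1; first by rewrite modn_small.
have -> : j = (j - L) + L by lia.
by rewrite modnDr modn_small; lia.
Qed.

Lemma offl i d : i < L -> d < L -> off N (cc i).1 (cc ((i + d) %% L)).2 = Yl (i + d) - X i.
Proof.
move=> hi hd; rewrite modL; last by lia.
rewrite /Yl; case: ifP => h.
  have h1 := X_le (leq_addr d i) h; have h2 := (XY h).1.
  have e1 : X i = off N b0 (cc i).1 := erefl.
  have e2 : Y (i + d) = off N b0 (cc (i + d)).2 := erefl.
  by apply: (@offB1 _ b0); lia.
have h1 : i + d - L < i by lia.
have h2 := Y_lt_X h1 hi.
have e1 : X i = off N b0 (cc i).1 := erefl.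
have e2 : Y (i + d - L) = off N b0 (cc (i + d - L)).2 := erefl.
by apply: (@offB2 _ b0); lia.
Qed.

Lemma offlx i d : i < L -> d < L -> off N (cc i).1 (cc ((i + d) %% L)).1 = Xl (i + d) - X i.
Proof.
move=> hi hd; rewrite modL; last by lia.
rewrite /Xl; case: ifP => h.
  have h1 := X_le (leq_addr d i) h.
  have e1 : X i = off N b0 (cc i).1 := erefl.
  have e2 : X (i + d) = off N b0 (cc (i + d)).1 := erefl.
  by apply: (@offB1 _ b0); lia.
have h1 : i + d - L < i by lia.
have h2 := Y_lt_X h1 hi.
have h3 := (XY (ltn_trans h1 hi)).1.
have e1 : X i = off N b0 (cc i).1 := erefl.
have e2 : X (i + d - L) = off N b0 (cc (i + d - L)).1 := erefl.
by apply: (@offB2 _ b0); lia.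
Qed.

Lemma XYl j : j < L + L -> Xl j <= Yl j.
Proof.
move=> h; rewrite /Xl /Yl; case: ifP => h1; first exact: (XY h1).1.
have := (XY (_ : j - L < L)).1; rewrite leq_add2r; apply; lia.
Qed.

Lemma YXl j : j.+1 < L + L -> Yl j < Xl j.+1.
Proof.
move=> h; rewrite /Xl /Yl.
case: (ltnP j.+1 L) => h1.
  by rewrite (ltnW h1); exact: YX1.
case: (ltnP j L) => h2.
  have -> : j.+1 - L = 0 by lia.
  rewrite X0; have := YN j; lia.
have -> : j.+1 - L = (j - L).+1 by lia.
rewrite ltn_add2r; apply: YX1; lia.
Qed.

Lemma Yl_step j : j.+1 < L + L -> Yl j < Yl j.+1.
Proof. by move=> h; have := YXl h; have := XYl h; lia. Qed.

Lemma Yl_mono j j' : j < j' -> j' < L + L -> Yl j < Yl j'.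
Proof.
move=> hjj'; rewrite -(subnKC hjj'); move: (j' - j.+1) => d.
elim: d => [|d IH] h.
  by rewrite addn0; apply: Yl_step; lia.
have a1 : j.+1 + d < L + L by lia.
have a2 : (j.+1 + d).+1 < L + L by lia.
have := IH a1; have := Yl_step a2; rewrite addnS; lia.
Qed.

Lemma Yl_le j j' : j <= j' -> j' < L + L -> Yl j <= Yl j'.
Proof.
rewrite leq_eqVlt => /orP[/eqP ->//|h] h'.
exact/ltnW/Yl_mono.
Qed.

Lemma X_Yl i d : i < L -> d < L -> X i <= Yl (i + d).
Proof.
move=> hi hd; have a1 : i + d < L + L by lia.
have := Yl_le (leq_addr d i) a1.
have : Yl i = Y i by rewrite /Yl hi.
have := (XY hi).1; lia.
Qed.


Let D i := find (fun d => Yl (i + d) == X i + k) (iota 0 L).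

Lemma D_spec i : i < L -> D i < L /\ Yl (i + D i) = X i + k.
Proof.
move=> hi; case: (tight hi) => j hj e.
have [d hd ej] : exists2 d, d < L & (i + d) %% L = j.
  case: (leqP i j) => hij.
    exists (j - i); first lia.
    have h : i + (j - i) < L by lia.
    by rewrite modL ?h; lia.
  exists (j + L - i); first lia.
  have h : (i + (j + L - i) < L) = false by apply/negbTE; rewrite -leqNgt; lia.
  by rewrite modL ?h; lia.
have := offl hi hd; rewrite ej e => e2.
have := X_Yl hi hd => e3.
have hp : has (fun d => Yl (i + d) == X i + k) (iota 0 L).
  by apply/hasP; exists d; [rewrite mem_iota; lia | apply/eqP; lia].
have hf : D i < L by move: hp; rewrite has_find size_iota.
split => //.
have := nth_find 0 hp; rewrite -/(D i) nth_iota // add0n.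
by move/eqP.
Qed.

Lemma D_mono i : i.+1 < L -> D i <= D i.+1.
Proof.
move=> hi; have hi' : i < L by lia.
case: (D_spec hi') => h1 e1; case: (D_spec hi) => h2 e2.
have := X_lt (ltnSn i) hi.
case: (leqP (i.+1 + D i.+1) (i + D i)) => h.
  have := Yl_le h (_ : i + D i < L + L); lia.
lia.
Qed.

Lemma D_wrap : D (L.-1) <= D 0.
Proof.
have hL := L_pos.
have hl : L.-1 < L by lia.
case: (D_spec hl) => h1 e1; case: (D_spec hL) => h2 e2.
case: (leqP (D 0 + L) (L.-1 + D (L.-1))) => h; last by lia.
have := Yl_le h (_ : L.-1 + D L.-1 < L + L).
have : Yl (D 0 + L) = Y (D 0) + N by rewrite /Yl ifF ?addnK //; lia.
have : Yl (D 0) = Y (D 0) by rewrite /Yl h2.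
have := XY hl; have := X0; have := YN (D 0); have := YN L.-1.
rewrite add0n in e2.
lia.
Qed.

Lemma D_const i : i < L -> D i = D 0.
Proof.
move=> hi.
have up j : j < L -> D 0 <= D j.
  elim: j => [//|j IH] hj; have := D_mono hj; have := IH (ltnW hj); lia.
have dn j : j < L -> D j <= D (L.-1).
  move=> hj.
  have H d : j + d < L -> D j <= D (j + d).
    elim: d => [|d IH] hd; first by rewrite addn0.
    have a1 : (j + d).+1 < L by rewrite -addnS.
    have := D_mono a1; have := IH (ltnW a1); rewrite addnS; lia.
  have a2 : j + (L.-1 - j) < L by lia.
  have := H _ a2; have -> : j + (L.-1 - j) = L.-1 by lia.
  done.
have := up i hi; have := dn i hi; have := D_wrap; lia.
Qed.


Lemma L_ge2 : 1 < L.
Proof.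
have hL := L_pos.
rewrite ltnNge; apply/negP => hL1.
have inP a : a < 3 -> off N b0 (c a).1 <= off N b0 (c a).2 /\ off N b0 (c a).2 <= k.
  move=> ha; case: (exists_max Nk (HcS ha)) => m mM hin.
  case: (cc_onto mM) => j hj ejm.
  have j0 : j = 0 by lia.
  rewrite -ejm j0 in hin.
  case: (in_base hL hin) => h1 h2 h3.
  have := XY hL; rewrite X0; lia.
have sf i j : i < 3 -> j < 3 -> (k < off N (c i).1 (c j).2) = (j == (i + 2) %% 3) := strict3 Hc (i:=i) (j:=j).
have so i j : i < 3 -> j < 3 -> (off N (c i).1 (c j).2 <= k) = (off N b0 (c i).1 <= off N b0 (c j).2).
  move=> hi hj; apply: small_off => //.
    by have := inP i hi; lia.
  by have := inP j hj; lia.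
have l20 : off N (c 2).1 (c 0).2 <= k by rewrite leqNgt sf.
have l12 : off N (c 1).1 (c 2).2 <= k by rewrite leqNgt sf.
have l01 : off N (c 0).1 (c 1).2 <= k by rewrite leqNgt sf.
have g10 : k < off N (c 1).1 (c 0).2 by rewrite sf.
have g21 : k < off N (c 2).1 (c 1).2 by rewrite sf.
have g02 : k < off N (c 0).1 (c 2).2 by rewrite sf.
rewrite so // in l20; rewrite so // in l12; rewrite so // in l01.
rewrite ltnNge so // in g10; rewrite ltnNge so // in g21; rewrite ltnNge so // in g02.
have := inP 0 isT; have := inP 1 isT; have := inP 2 isT; lia.
Qed.

Lemma tourn j : 0 < j -> j < L -> (j <= D 0) = ~~ (L <= j + D 0).
Proof.
move=> hj0 hj.
have hL := L_pos.
have hL2 := L_ge2.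
case: (D_spec hL) => hs es; rewrite add0n X0 add0n in es.
case: (D_spec hj) => _ ej; rewrite (D_const hj) in ej.
have n := S_nadj Hmax (MS_S (cc_M hL)) (MS_S (cc_M hj)).
have o1 := offl hL hj; rewrite add0n modn_small // in o1.
have hLj : L - j < L by lia.
have o2 := offl hj hLj.
rewrite (_ : j + (L - j) = L) in o2; last by lia.
rewrite modnn in o2.
have eYj : Yl j = Y j by rewrite /Yl hj.
have eYL : Yl L = Y 0 + N by rewrite /Yl ltnn subnn.
have hX := XY hj; have hX0 := XY hL; rewrite X0 in hX0.
move: n; rewrite /nadj o1 o2 X0 eYj eYL subn0.
have m1 : (j <= D 0) = (Yl j <= Yl (D 0)).
  apply/idP/idP => h.
    by apply: Yl_le h _; lia.
  by rewrite leqNgt; apply/negP => h'; have := Yl_mono h' (_ : j < L + L); lia.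
have m2 : (L <= j + D 0) = (Yl L <= Yl (j + D 0)).
  apply/idP/idP => h.
    by apply: Yl_le h _; lia.
  by rewrite leqNgt; apply/negP => h'; have := Yl_mono h' (_ : L < L + L); lia.
rewrite m1 m2 eYj eYL es ej.
case/orP => h.
  by apply/idP/idP => _; [apply/negP|]; lia.
by apply/idP/idP => h'; [apply/negP|]; lia.
Qed.

Lemma L_odd : L = (D 0).*2.+1 /\ 0 < D 0.
Proof.
have hL2 := L_ge2.
have hs := (D_spec L_pos).1.
have s1 : 0 < D 0.
  rewrite lt0n; apply/negP => /eqP s0.
  have := tourn (isT : 0 < 1) hL2; rewrite s0 addn0 /=; lia.
split => //.
have t1 := tourn s1 hs.
rewrite leqnn in t1.
have h1 : D 0 + D 0 < L by move: t1; case: leqP => // h _.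
have h3 : (D 0).+1 < L by lia.
have t2 := tourn (isT : 0 < (D 0).+1) h3.
rewrite ltnn in t2.
have h2 : L <= (D 0).+1 + D 0 by move: t2; case: leqP.
rewrite -addnn; lia.
Qed.


Lemma chain_inside (a : 'I_L) (p : vtx N) :
  chain N (xx L cc a) [:: (false, nat_of_ord p.1); (false, nat_of_ord p.2); (false, nat_of_ord (yy L cc a))]
  = inside p (cc a).
Proof.
rewrite /chain /= /xx /yy /cyc modn_small // off0 /inside andbT //.
Qed.

Lemma final_sec : exists (t : nat) (c0 : nat -> vtx N),
    1 <= t /\ alt_cycle k (2 * t).+1 c0 /\ matching_conditions k t c0 /\ S = Dset k (2 * t).+1 c0.
Proof.
case: L_odd => eL s1.
have e2 : (2 * D 0).+1 = L by rewrite eL mul2n.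
have hL := L_pos.
exists (D 0), cc.
split => //.
split.
  rewrite e2; split => //.
  split; first exact: cc_inj.
  split.
    by move=> a ha; rewrite inE /incb; apply: (S_inc Hmax); apply: MS_S; apply: cc_M.
  move=> a ha.
  change (k < off N (xx L cc a) (yy L cc (a + L - 1))).
  rewrite /xx /yy /cyc (modn_small ha) (_ : a + L - 1 = a + (L - 1)); last by lia.
  rewrite offl //; last by lia.
  case: (D_spec ha) => _; rewrite (D_const ha) => es.
  have := Yl_mono (_ : a + D 0 < a + (L - 1)) (_ : a + (L - 1) < L + L).
  rewrite es; lia.
split.
  rewrite /matching_conditions e2 => a ha.
  split.
    rewrite /chain /= /xx /yy /cyc (modn_small ha) off0 /=.
    have hL2 := L_ge2.
    have ey : off N (cc a).1 (cc a).2 = Y a - X a by rewrite YE //; lia.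
    have ex1 : off N (cc a).1 (cc (a.+1 %% L)).1 = Xl a.+1 - X a.
      by have := offlx ha (_ : 1 < L); rewrite addn1; apply.
    have ey1 : off N (cc a).1 (cc (a.+1 %% L)).2 = Yl a.+1 - X a.
      by have := offl ha (_ : 1 < L); rewrite addn1; apply.
    rewrite ey ex1 ey1.
    have h1 := YXl (_ : a.+1 < L + L).
    have h2 := XYl (_ : a.+1 < L + L).
    have : Yl a = Y a by rewrite /Yl ha.
    have := XY ha.
    move=> h3 h4; apply/andP; split; [|apply/andP; split => //].
      have := h1 (_ : a.+1 < L + L); lia.
    have := h2 (_ : a.+1 < L + L); lia.
  rewrite /pair_size /xx /yy /cyc (modn_small ha).
  case: (D_spec ha) => hs; rewrite (D_const ha) => es.
  rewrite offl //; lia.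
rewrite e2.
have sub : S \subset Dset k L cc.
  apply/subsetP => p pS; rewrite /Dset inE.
  apply/andP; split; first by rewrite inE /incb; apply: (S_inc Hmax).
  case: (exists_max Nk pS) => m mM hin.
  case: (cc_onto mM) => j hj ejm.
  apply/existsP; exists (Ordinal hj).
  by rewrite chain_inside /= ejm.
have ind : independent k (Dset k L cc).
  split.
    by apply/subsetP => p; rewrite inE => /andP[].
  move=> p q; rewrite !inE => /andP[_ /existsP[a ha]] /andP[_ /existsP[b hb]].
  rewrite chain_inside in ha; rewrite chain_inside in hb.
  rewrite adjGE negbK.
  exact: nadj_in (ltn_ord a) (ltn_ord b) ha hb.
by rewrite (Hmax.2 _ sub ind).
Qed.

End Final.


Theorem theorem5p7 (n k : nat) (S : {set vtx (n + k)}) :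
  3 <= n -> k < n -> n <= 2 * k ->
  maximal_independent k S ->
  ~ reversible k S ->
  (exists c : nat -> vtx (n + k),
      strict_alt_cycle k 3 c /\ (forall a, a < 3 -> c a \in S) /\
      disjoint_property c) ->
  exists (t : nat) (c0 : nat -> vtx (n + k)),
    1 <= t /\ alt_cycle k (2 * t).+1 c0 /\ matching_conditions k t c0 /\
    S = Dset k (2 * t).+1 c0.
Proof.
move=> h3 hkn hn2 Hmax _ [c [Hc [HcS Hd]]].
have Nk : 2 * k < n + k by lia.
case: (exists_max Nk (HcS 0 isT)) => m0 m0M _.
exact: (final_sec Nk Hmax Hc HcS Hd m0M).
Qed.
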